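(* Let $D=\mathrm{diag}(1,-1,1,-1,\ldots)=(1,-x)$, let $R$ be a Riordan involution (respectively, a Riordan pseudo involution), and put $U=RD$ and $V=DR$. Then for each positive integer $n$: (a) the columns of $(U+D)^n$ (respectively, $(R+D)^n$) are $R$-invariant sequences of the first kind; (b) the columns of $(U-D)^n$ (respectively, $(R-D)^n$) are inverse $R$-invariant sequences of the first kind; (c) the columns of $(V^T+D)^n$ (respectively, $(R^T+D)^n$) are $R$-invariant sequences of the second kind; (d) the columns of $(V^T-D)^n$ (respectively, $(R^T-D)^n$) are inverse $R$-invariant sequences of the second kind.
   Context: All matrices are infinite, indexed by $0,1,2,\ldots$. A Riordan matrix $(g(x),f(x))$, with $g(x)=g_0+g_1x+\cdots$, $g_0\ne0$, and $f(x)=f_1x+\cdots$, $f_1\ne0$, is the infinite lower triangular matrix whose $j$-th column has generating function $g(x)f(x)^j$. A Riordan matrix $R$ is a Riordan involution if $R^2=I$ and a Riordan pseudo involution if $(RD)^2=I$. For a Riordan involution $R$, a vector $\mathbf x\in\mathbb{R}^\infty$ is an $R$-invariant sequence of the first kind if $R\mathbf x=\mathbf x$, an inverse $R$-invariant sequence of the first kind if $R\mathbf x=-\mathbf x$, an $R$-invariant sequence of the second kind if $R^T\mathbf x=\mathbf x$, and an inverse $R$-invariant sequence of the second kind if $R^T\mathbf x=-\mathbf x$. For a Riordan pseudo involution $R$, the same notions are defined with $R$ replaced by $RD$ (first kind) and $R^T$ replaced by $R^TD$ (second kind). *)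

(* Defs.v *)
From mathcomp Require Import all_boot all_order all_algebra.
Set Implicit Arguments. Unset Strict Implicit. Unset Printing Implicit Defensive.
Import Order.TTheory GRing.Theory Num.Theory.
Local Open Scope ring_scope.

Section Defs.
Variable R : realFieldType.

Definition fps := nat -> R.
Definition imat := nat -> nat -> R.
Definition ivec := nat -> R.

Definition fps_mul (a b : fps) : fps :=
  fun n => \sum_(k < n.+1) a k * b (n - k)%N.
Definition fps_one : fps := fun n => if n == 0%N then 1 else 0.
Fixpoint fps_pow (a : fps) (j : nat) : fps :=
  match j with 0%N => fps_one | j'.+1 => fps_mul a (fps_pow a j') end.

(* The Riordan matrix (g, f): column j has generating function g f^j *)
Definition riordan_mat (g f : fps) : imat := fun i j => fps_mul g (fps_pow f j) i.

Definition is_riordan (M : imat) : Prop :=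
  exists g f : fps, g 0%N != 0 /\ f 0%N = 0 /\ f 1%N != 0 /\
    forall i j, M i j = riordan_mat g f i j.

(* Matrix operations.  The product sums over k <= max i j; this is the exact
   (infinite) product whenever A is lower triangular or B is upper triangular,
   which covers every product used below. *)
Definition mmul (A B : imat) : imat :=
  fun i j => \sum_(k < (maxn i j).+1) A i k * B k j.
Definition madd (A B : imat) : imat := fun i j => A i j + B i j.
Definition msub (A B : imat) : imat := fun i j => A i j - B i j.
Definition mtr (A : imat) : imat := fun i j => A j i.
Definition mid : imat := fun i j => if i == j then 1 else 0.
Fixpoint mpow (A : imat) (n : nat) : imat :=
  match n with 0%N => mid | n'.+1 => mmul A (mpow A n') end.
Definition mcol (A : imat) (j : nat) : ivec := fun i => A i j.

Definition Dmat : imat := fun i j => if i == j then (-1) ^+ i else 0.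

Definition meq (A B : imat) : Prop := forall i j, A i j = B i j.

Definition riordan_involution (M : imat) : Prop :=
  is_riordan M /\ meq (mmul M M) mid.
Definition riordan_pseudo_involution (M : imat) : Prop :=
  is_riordan M /\ meq (mmul (mmul M Dmat) (mmul M Dmat)) mid.

(* A x for a lower triangular A (exact finite sum) *)
Definition mulv_low (A : imat) (x : ivec) : ivec :=
  fun i => \sum_(k < i.+1) A i k * x k.

Definition finsupp (x : ivec) (N : nat) : Prop := forall k, (N <= k)%N -> x k = 0.

(* A^T x for finitely supported x: (A^T x)_i = sum_k A k i x k *)
Definition mulTv_eq (A : imat) (x : ivec) (s : R) : Prop :=
  exists N, finsupp x N /\ forall i, \sum_(k < N) A k i * x k = s * x i.

(* Invariant sequences w.r.t. a lower-triangular matrix A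
   (A = R for an involution, A = R D for a pseudo involution). *)
Definition inv_seq_first (A : imat) (x : ivec) : Prop := forall i, mulv_low A x i = x i.
Definition inverse_inv_seq_first (A : imat) (x : ivec) : Prop :=
  forall i, mulv_low A x i = - x i.
(* second kind: B^T x = x, with B = R (involution) or B = D R, so B^T = R^T D
   (pseudo involution). *)
Definition inv_seq_second (B : imat) (x : ivec) : Prop := mulTv_eq B x 1.
Definition inverse_inv_seq_second (B : imat) (x : ivec) : Prop := mulTv_eq B x (-1).

End Defs.

(* Main.v *)
Require Import Defs.
From mathcomp Require Import all_boot all_order all_algebra.
From Stdlib Require Import FunctionalExtensionality.
From mathcomp Require Import ring zify.
Import GRing.Theory Num.Theory.
Local Open Scope ring_scope.
Set Implicit Arguments.

Section H.
Variable K : realFieldType.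
Implicit Types A B C X Z : imat K.

Definition lower A := forall i j, (i < j)%N -> A i j = 0.
Definition msc (s : K) A : imat K := fun i j => s * A i j.

Lemma mext A B : (forall i j, A i j = B i j) -> A = B.
Proof. move=> h; apply: functional_extensionality => i; apply: functional_extensionality => j; exact: h. Qed.

Lemma sum_trunc (F : nat -> K) a N : (a <= N)%N -> (forall k, (a <= k)%N -> F k = 0) ->
  \sum_(k < N) F k = \sum_(k < a) F k.
Proof.
move=> aN F0; rewrite (big_ord_widen N F aN) [RHS]big_mkcond /=.
apply: eq_bigr => k _; case: ifP => // /negbT; rewrite -leqNgt => h.
by rewrite F0.
Qed.

Lemma mmul_low A B i j N : lower A -> (i < N)%N -> mmul A B i j = \sum_(k < N) A i k * B k j.
Proof.
move=> lA iN; rewrite /mmul (@sum_trunc (fun k => A i k * B k j) i.+1) ?ltnS ?leq_maxl //; last first.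
  by move=> k hk; rewrite lA ?mul0r.
rewrite (@sum_trunc (fun k => A i k * B k j) i.+1 N) //.
by move=> k hk; rewrite lA ?mul0r.
Qed.

Lemma sum_delta (F : nat -> K) N j : (j < N)%N ->
  \sum_(k < N) F k * (if (k:nat) == j then 1 else 0) = F j.
Proof.
move=> hj; rewrite (bigD1 (Ordinal hj)) //= eqxx mulr1 big1 ?addr0 // => k hk.
rewrite ifF ?mulr0 //; apply: contraNF hk => /eqP h; apply/eqP/val_inj => /=; exact: h.
Qed.

Lemma mmul1l A : mmul (mid K) A = A.
Proof.
apply: mext => i j; rewrite /mmul.
rewrite (eq_bigr (fun k : 'I__ => A k j * (if (k:nat) == i then 1 else 0))).
  by rewrite (sum_delta (fun k => A k j)) // ltnS leq_maxl.
by move=> k _; rewrite /mid mulrC eq_sym.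
Qed.

Lemma mmul1r A : mmul A (mid K) = A.
Proof. by apply: mext => i j; rewrite /mmul (sum_delta (fun k => A i k)) // ltnS leq_maxr. Qed.

Lemma lower_mmul A B : lower A -> lower B -> lower (mmul A B).
Proof.
move=> lA lB i j ij; rewrite /mmul big1 // => k _.
case: (leqP k i) => h; first by rewrite lB ?mulr0 // (leq_ltn_trans h ij).
by rewrite lA ?mul0r.
Qed.

Lemma lower_madd A B : lower A -> lower B -> lower (madd A B).
Proof. by move=> lA lB i j ij; rewrite /madd lA ?lB ?addr0. Qed.
Lemma lower_msub A B : lower A -> lower B -> lower (msub A B).
Proof. by move=> lA lB i j ij; rewrite /msub lA ?lB ?subr0. Qed.
Lemma lower_mid : lower (mid K).
Proof. by move=> i j ij; rewrite /mid ifF // ltn_eqF. Qed.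
Lemma lower_D : lower (Dmat K).
Proof. by move=> i j ij; rewrite /Dmat ifF // ltn_eqF. Qed.
Lemma lower_mpow X n : lower X -> lower (mpow X n).
Proof. move=> lX; elim: n => [|n IH] /=; [exact: lower_mid | exact: lower_mmul]. Qed.

Lemma mmulA A B C : lower A -> lower B -> mmul (mmul A B) C = mmul A (mmul B C).
Proof.
move=> lA lB; apply: mext => i j.
set N := (maxn i j).+1.
have iN : (i < N)%N by rewrite ltnS leq_maxl.
have -> : mmul (mmul A B) C i j = \sum_(k < N) mmul A B i k * C k j by [].
have -> : mmul A (mmul B C) i j = \sum_(k < N) A i k * mmul B C k j by [].
rewrite (eq_bigr (fun k : 'I_N => \sum_(l < N) A i l * B l k * C k j)); last first.
  by move=> k _; rewrite (@mmul_low A B i k N lA iN) mulr_suml.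
rewrite exchange_big /=; apply: eq_bigr => l _.
by rewrite (@mmul_low B C l j N lB (ltn_ord l)) mulr_sumr; apply: eq_bigr => k _; rewrite mulrA.
Qed.

Lemma mmulDr A B C : mmul A (madd B C) = madd (mmul A B) (mmul A C).
Proof. by apply: mext => i j; rewrite /mmul /madd -big_split; apply: eq_bigr => k _; rewrite mulrDr. Qed.
Lemma mmulDl A B C : mmul (madd A B) C = madd (mmul A C) (mmul B C).
Proof. by apply: mext => i j; rewrite /mmul /madd -big_split; apply: eq_bigr => k _; rewrite mulrDl. Qed.
Lemma mmulBr A B C : mmul A (msub B C) = msub (mmul A B) (mmul A C).
Proof. by apply: mext => i j; rewrite /mmul /msub -sumrB; apply: eq_bigr => k _; rewrite mulrBr. Qed.
Lemma mmulBl A B C : mmul (msub A B) C = msub (mmul A C) (mmul B C).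
Proof. by apply: mext => i j; rewrite /mmul /msub -sumrB; apply: eq_bigr => k _; rewrite mulrBl. Qed.
Lemma mmulZr s A B : mmul A (msc s B) = msc s (mmul A B).
Proof. by apply: mext => i j; rewrite /mmul /msc mulr_sumr; apply: eq_bigr => k _; rewrite mulrCA. Qed.
Lemma mmulZl s A B : mmul (msc s A) B = msc s (mmul A B).
Proof. by apply: mext => i j; rewrite /mmul /msc mulr_sumr; apply: eq_bigr => k _; rewrite mulrA. Qed.

Lemma mmulDD : mmul (Dmat K) (Dmat K) = mid K.
Proof.
apply: mext => i j; rewrite /mmul.
rewrite (eq_bigr (fun k : 'I__ => ((-1) ^+ i * Dmat K k j) * (if (k:nat) == i then 1 else 0))).
  rewrite (sum_delta (fun k => (-1) ^+ i * Dmat K k j)) ?ltnS ?leq_maxl // /Dmat /mid.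
  by case: eqP => [->|]; rewrite ?mulr0 // -exprMn mulrNN mulr1 expr1n.
move=> k _; rewrite /Dmat [(k:nat) == i]eq_sym.
by case: eqP => [<-|]; rewrite ?mulr1 ?mulr0 ?mul0r.
Qed.

Lemma mpowSr X n : lower X -> mpow X n.+1 = mmul (mpow X n) X.
Proof.
move=> lX; elim: n => [|n IH] /=; first by rewrite mmul1l mmul1r.
change (mmul X (mpow X n.+1) = mmul (mpow X n.+1) X); rewrite {1}IH -mmulA //; exact: lower_mpow.
Qed.

Lemma mtr_mmul A B : mtr (mmul A B) = mmul (mtr B) (mtr A).
Proof. by apply: mext => i j; rewrite /mtr /mmul maxnC; apply: eq_bigr => k _; rewrite mulrC. Qed.

Lemma mtr_mpow X n : lower X -> mtr (mpow X n) = mpow (mtr X) n.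
Proof.
move=> lX; elim: n => [|n IH].
  by apply: mext => i j; rewrite /mtr /= /mid eq_sym.
by rewrite mpowSr // mtr_mmul IH.
Qed.

Lemma Dsym i j : Dmat K j i = Dmat K i j.
Proof. by rewrite /Dmat eq_sym; case: eqP => [->|]. Qed.

Lemma first_kind B X s n j : lower B -> lower X -> mmul B X = msc s X -> (0 < n)%N ->
  forall i, mulv_low B (mcol (mpow X n) j) i = s * mpow X n i j.
Proof.
move=> lB lX h; case: n => // n _ i.
rewrite /mulv_low /mcol -(@mmul_low B (mpow X n.+1) i j i.+1 lB (ltnSn i)) /= -mmulA // ?h ?mmulZl //.
Qed.

Lemma second_kind B Z s n j : lower B -> lower Z -> mmul Z B = msc s Z -> (0 < n)%N ->
  mulTv_eq B (mcol (mpow (mtr Z) n) j) s.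
Proof.
move=> lB lZ h n0; exists j.+1; split.
  by move=> k hk; rewrite /mcol -mtr_mpow // /mtr lower_mpow.
move=> i; rewrite /mcol -mtr_mpow // /mtr.
have -> : \sum_(k < j.+1) B k i * mpow Z n j k = mmul (mpow Z n) B j i.
  by rewrite (@mmul_low (mpow Z n) B j i j.+1 (lower_mpow n lZ) (ltnSn j)); apply: eq_bigr => k _; rewrite mulrC.
case: n n0 => // n _.
rewrite mpowSr // mmulA //; [by rewrite h mmulZr | exact: lower_mpow].
Qed.


Lemma fps_pow_low (f : fps K) j k : f 0%N = 0 -> (k < j)%N -> fps_pow f j k = 0.
Proof.
move=> f0; elim: j k => // j IH k hk /=; rewrite /fps_mul big1 // => -[[|l] hl] _ /=.
  by rewrite f0 mul0r.
by rewrite IH ?mulr0 //; lia.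
Qed.

Lemma riordan_lower M : is_riordan M -> lower M.
Proof.
case=> g [f [_ [f0 [_ hM]]]] i j ij; rewrite hM /riordan_mat /fps_mul big1 // => k _.
by rewrite fps_pow_low ?mulr0 //; have := ltn_ord k; lia.
Qed.

End H.

Ltac lowt := repeat first [ assumption | apply: lower_msub | apply: lower_madd
  | apply: lower_mmul | apply: lower_mpow | apply: lower_D | apply: lower_mid ].

Theorem lemma5p1 (K : realFieldType) (M : imat K) :
  (riordan_involution M ->
    forall n : nat, (0 < n)%N -> forall j : nat,
      let U := mmul M (Dmat K) in
      let V := mmul (Dmat K) M in
      inv_seq_first M (mcol (mpow (madd U (Dmat K)) n) j) /\
      inverse_inv_seq_first M (mcol (mpow (msub U (Dmat K)) n) j) /\
      inv_seq_second M (mcol (mpow (madd (mtr V) (Dmat K)) n) j) /\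
      inverse_inv_seq_second M (mcol (mpow (msub (mtr V) (Dmat K)) n) j)) /\
  (riordan_pseudo_involution M ->
    forall n : nat, (0 < n)%N -> forall j : nat,
      inv_seq_first (mmul M (Dmat K)) (mcol (mpow (madd M (Dmat K)) n) j) /\
      inverse_inv_seq_first (mmul M (Dmat K)) (mcol (mpow (msub M (Dmat K)) n) j) /\
      inv_seq_second (mmul (Dmat K) M) (mcol (mpow (madd (mtr M) (Dmat K)) n) j) /\
      inverse_inv_seq_second (mmul (Dmat K) M) (mcol (mpow (msub (mtr M) (Dmat K)) n) j)).
Proof.
set D := Dmat K.
have lD : lower D by exact: lower_D.
have eA : forall V, madd (mtr V) D = mtr (madd V D).
  by move=> V; apply: mext => a b; rewrite /madd /mtr /D Dsym.
have eB : forall V, msub (mtr V) D = mtr (msub V D).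
  by move=> V; apply: mext => a b; rewrite /msub /mtr /D Dsym.
split.
- case=> hR hMM n n0 j U V.
  have lM := riordan_lower hR.
  have HM : mmul M M = mid K by apply: mext.
  split; [|split; [|split]].
  + move=> i; rewrite (@first_kind K M (madd U D) 1 n j lM) ?mul1r //; rewrite /U; first lowt.
    rewrite mmulDr -mmulA // HM mmul1l; apply: mext => a b; rewrite /madd /msc; ring.
  + move=> i; rewrite (@first_kind K M (msub U D) (-1) n j lM) ?mulN1r //; rewrite /U; first lowt.
    rewrite mmulBr -mmulA // HM mmul1l; apply: mext => a b; rewrite /msub /msc; ring.
  + rewrite eA; apply: second_kind => //; rewrite /V; first lowt.
    rewrite mmulDl mmulA // HM mmul1r; apply: mext => a b; rewrite /madd /msc; ring.
  + rewrite eB; apply: second_kind => //; rewrite /V; first lowt.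
    rewrite mmulBl mmulA // HM mmul1r; apply: mext => a b; rewrite /msub /msc; ring.
- case=> hR hMM n n0 j.
  have lM := riordan_lower hR.
  have HP : mmul (mmul M D) (mmul M D) = mid K by apply: mext.
  have MDM : mmul (mmul M D) M = D.
    rewrite -[RHS]mmul1l -HP !mmulA ?mmulDD ?mmul1r //; lowt.
  split; [|split; [|split]].
  + move=> i; rewrite (@first_kind K (mmul M D) (madd M D) 1 n j) ?mul1r //; try lowt.
    rewrite mmulDr MDM mmulA // mmulDD mmul1r; apply: mext => a b; rewrite /madd /msc; ring.
  + move=> i; rewrite (@first_kind K (mmul M D) (msub M D) (-1) n j) ?mulN1r //; try lowt.
    rewrite mmulBr MDM mmulA // mmulDD mmul1r; apply: mext => a b; rewrite /msub /msc; ring.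
  + rewrite eA; apply: second_kind => //; try lowt.
    rewrite mmulDl -!mmulA // MDM mmulDD mmul1l; apply: mext => a b; rewrite /madd /msc; ring.
  + rewrite eB; apply: second_kind => //; try lowt.
    rewrite mmulBl -!mmulA // MDM mmulDD mmul1l; apply: mext => a b; rewrite /msub /msc; ring.
Qed.
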